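(* There exists a linear symplectic coordinate transform generated by an orthogonal rotation matrix $T\in SO(2)$ (acting as $\bar W=TW$, $\bar w=Tw$) depending only on the masses $m=(m_1,m_2,m_3)$ and the charges $e_1,e_2,e_3$ such that under this transformation the lower right $2\times2$ sub-matrix of $B_2(\theta)$ in the system $\begin{pmatrix}\dot{\bar W}\\ \dot{\bar w}\end{pmatrix}=JB_2(\theta)\begin{pmatrix}\bar W\\ \bar w\end{pmatrix}$ is diagonalized, and $B_2(\theta)$ becomes $$\bar B_2(\theta)=\begin{pmatrix}1&0&0&1\\0&1&-1&0\\0&-1&\frac{2e\cos\theta-1-\sqrt{9-\beta}}{2(1+e\cos\theta)}&0\\1&0&0&\frac{2e\cos\theta-1+\sqrt{9-\beta}}{2(1+e\cos\theta)}\end{pmatrix},$$ where $\beta=36(m_2m_3\sin^2\theta_1+m_3m_1\sin^2\theta_2+m_1m_2\sin^2\theta_3)$.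
   Context: Charged planar three-body problem with masses $m_i>0$, $m_1+m_2+m_3=1$, non-collinear central configuration with inner angles $\theta_1,\theta_2,\theta_3$, eccentricity $e\in[0,1)$, true anomaly $\theta$. $I$ is the $2\times2$ identity and $J=\begin{pmatrix}0&-1\\1&0\end{pmatrix}$ (the standard symplectic matrix on $\mathbb{R}^4$ in the ODE). The essential part of the linearized system at the elliptic triangle solution has coefficient matrix $B_2(\theta)=\begin{pmatrix}I&-J\\ J&\frac{e\cos\theta\, I+\tilde D}{1+e\cos\theta}\end{pmatrix}$ with $\tilde D=\begin{pmatrix}1-3d_1&-3d_2\\-3d_2&1-3d_4\end{pmatrix}$, where $d_1=m_1\cos^2(\theta_2-\theta_3)+m_2\cos^2\theta_2+m_3\cos^2\theta_3$, $d_2=m_1\cos(\theta_2-\theta_3)\sin(\theta_2-\theta_3)+m_2\cos\theta_2\sin\theta_2-m_3\cos\theta_3\sin\theta_3$, $d_4=m_1\sin^2(\theta_2-\theta_3)+m_2\sin^2\theta_2+m_3\sin^2\theta_3$. *)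

(* Defs.v *)
From HB Require Import structures.
From mathcomp Require Import all_boot all_order all_algebra.
From mathcomp Require Import all_classical all_reals all_analysis.
Set Implicit Arguments. Unset Strict Implicit. Unset Printing Implicit Defensive.
Import Order.TTheory GRing.Theory Num.Theory.
Local Open Scope ring_scope.

Section Defs.
Variable R : realType.

Definition mx2 (a b c d : R) : 'M[R]_2 :=
  \matrix_(i < 2, j < 2) (nth [::] [:: [:: a; b]; [:: c; d]] i)`_j.

Definition J2 : 'M[R]_2 := mx2 0 (-1) 1 0.

Definition J4 : 'M[R]_(2 + 2) := block_mx 0 (- 1%:M) 1%:M 0.

Definition d1 (m1 m2 m3 th2 th3 : R) : R :=
  m1 * cos (th2 - th3) ^+ 2 + m2 * cos th2 ^+ 2 + m3 * cos th3 ^+ 2.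
Definition d2 (m1 m2 m3 th2 th3 : R) : R :=
  m1 * cos (th2 - th3) * sin (th2 - th3) + m2 * cos th2 * sin th2
  - m3 * cos th3 * sin th3.
Definition d4 (m1 m2 m3 th2 th3 : R) : R :=
  m1 * sin (th2 - th3) ^+ 2 + m2 * sin th2 ^+ 2 + m3 * sin th3 ^+ 2.

Definition Dtilde (m1 m2 m3 th2 th3 : R) : 'M[R]_2 :=
  mx2 (1 - 3 * d1 m1 m2 m3 th2 th3) (- 3 * d2 m1 m2 m3 th2 th3)
      (- 3 * d2 m1 m2 m3 th2 th3) (1 - 3 * d4 m1 m2 m3 th2 th3).

Definition B2 (m1 m2 m3 th2 th3 e theta : R) : 'M[R]_(2 + 2) :=
  block_mx 1%:M (- J2) J2
    ((1 + e * cos theta)^-1 *: ((e * cos theta)%:M + Dtilde m1 m2 m3 th2 th3)).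

Definition beta (m1 m2 m3 th1 th2 th3 : R) : R :=
  36 * (m2 * m3 * sin th1 ^+ 2 + m3 * m1 * sin th2 ^+ 2 + m1 * m2 * sin th3 ^+ 2).

Definition mx4 (rows : seq (seq R)) : 'M[R]_(2 + 2) :=
  \matrix_(i < 2 + 2, j < 2 + 2) (nth [::] rows i)`_j.

Definition Bbar2 (m1 m2 m3 th1 th2 th3 e theta : R) : 'M[R]_(2 + 2) :=
  let b := beta m1 m2 m3 th1 th2 th3 in
  let c := e * cos theta in
  mx4 [:: [:: 1; 0; 0; 1];
          [:: 0; 1; -1; 0];
          [:: 0; -1; (2 * c - 1 - Num.sqrt (9 - b)) / (2 * (1 + c)); 0];
          [:: 1; 0; 0; (2 * c - 1 + Num.sqrt (9 - b)) / (2 * (1 + c))]].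

Definition SO2 (T : 'M[R]_2) : Prop := T *m T^T = 1%:M /\ \det T = 1.

(* the induced linear coordinate change (Wbar, wbar) = (T W, T w) on R^4 *)
Definition liftT (T : 'M[R]_2) : 'M[R]_(2 + 2) := block_mx T 0 0 T.

End Defs.

(* Main.v *)
Require Import Defs.
From HB Require Import structures.
From mathcomp Require Import all_boot all_order all_algebra.
From mathcomp Require Import all_classical all_reals all_analysis.
From mathcomp Require Import ring lra.
Import Order.TTheory GRing.Theory Num.Theory.
Local Open Scope ring_scope.

Ltac ent := apply/matrixP; case=> [[|[|?]] ?] //; case=> [[|[|?]] ?] //; rewrite !mxE /= ?big_ord_recr /= ?big_ord0 /= ?mxE /= ?mulr1n ?mulr0n.

Section H.
Variable R : realType.


Lemma mx2_comm (p q : R) : mx2 p q (-q) p *m J2 R = J2 R *m mx2 p q (-q) p.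
Proof. rewrite /J2. ent; ring. Qed.

Lemma conj2 (p q a b d l1 l2 c k x1 x2 : R) :
  p * a + q * b = l1 * p -> p * b + q * d = l1 * q -> -q * a + p * b = -(l2 * q) -> -q * b + p * d = l2 * p ->
  x1 = k * (c+l1) -> x2 = k * (c+l2) ->
  mx2 p q (-q) p *m (k *: (c%:M + mx2 a b b d)) = mx2 x1 0 0 x2 *m mx2 p q (-q) p.
Proof.
move=> E1 E2 E3 E4 -> ->.
have k1 := congr1 (fun x => k * x) E1; have k2 := congr1 (fun x => k * x) E2.
have k3 := congr1 (fun x => k * x) E3; have k4 := congr1 (fun x => k * x) E4.
move: k1 k2 k3 k4 => /= k1 k2 k3 k4.
ent. all: lra.
Qed.

Lemma eig (a b d s : R) : 0 <= s -> s ^+ 2 = (a - d) ^+ 2 + 4 * b ^+ 2 ->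
  exists p q : R, p ^+ 2 + q ^+ 2 = 1 /\
   p * a + q * b = (a+d-s)/2 * p /\ p * b + q * d = (a+d-s)/2 * q /\
   -q * a + p * b = -((a+d+s)/2 * q) /\ -q * b + p * d = (a+d+s)/2 * p.
Proof.
move=> s0 hs.
have hsu : `|a - d| <= s.
  by rewrite -(ger0_norm s0) -ler_sqr ?normr_ge0 // !real_normK ?num_real //; nra.
case: (ltrP 0 (s + (a - d))) => hp.
- set N := Num.sqrt (2 * s * (s + (a - d))).
  have N2 : N ^+ 2 = 2 * s * (s + (a - d)) by rewrite sqr_sqrtr //; nra.
  have spos : 0 < s by move: hsu; rewrite ler_norml; lra.
  have Npos : 0 < N by rewrite sqrtr_gt0; nra.
  have Nn0 : N != 0 by rewrite gt_eqF.
  exists (-2 * b / N), ((a - d + s) / N).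
  have H : (-2 * b) ^+ 2 + (a - d + s) ^+ 2 = 2 * s * (s + (a - d)) by lra.
  split; first by rewrite !expr_div_n -mulrDl H -N2 divff // expf_neq0.
  split; first by (apply: (@mulfI _ N) => //; field => //; lra).
  split.
    apply/eqP; rewrite -subr_eq0; apply/eqP.
    transitivity ((-2 * b ^+ 2 + (a - d + s) * (d - (a + d - s) / 2)) / N); first by field.
    by rewrite (_ : _ + _ = 0) ?mul0r //; lra.
  split.
    apply/eqP; rewrite -subr_eq0; apply/eqP.
    transitivity ((-(a - d + s) * a - 2 * b ^+ 2 + (a + d + s) * (a - d + s) / 2) / N); first by field.
    by rewrite (_ : _ + _ = 0) ?mul0r //; lra.
  by apply: (@mulfI _ N) => //; field.
- have e1 : s + (a - d) = 0 by move: hsu; rewrite ler_norml; lra.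
  have b0 : b = 0.
    have hs' : s = -(a - d) by lra.
    have b2 : b ^+ 2 = 0 by rewrite hs' in hs; lra.
    by move/eqP: b2; rewrite sqrf_eq0 => /eqP.
  exists 1, 0; rewrite b0; split; first by ring.
  split; first by lra.
  split; first by lra.
  split; lra.
Qed.

Lemma det2 (p q r t : R) : \det (mx2 p q r t) = p * t - q * r.
Proof.
rewrite (expand_det_row _ 0) big_ord_recr /= big_ord_recr /= big_ord0.
rewrite /cofactor !det_mx11 !mxE /= expr0 expr1; ring.
Qed.

Lemma Bbar_block (m1 m2 m3 th1 th2 th3 e theta : R) :
  Bbar2 m1 m2 m3 th1 th2 th3 e theta =
  block_mx 1%:M (- J2 R) (J2 R)
   (mx2 ((2 * (e * cos theta) - 1 - Num.sqrt (9 - beta m1 m2 m3 th1 th2 th3)) / (2 * (1 + e * cos theta))) 0 0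
        ((2 * (e * cos theta) - 1 + Num.sqrt (9 - beta m1 m2 m3 th1 th2 th3)) / (2 * (1 + e * cos theta)))).
Proof.
rewrite -[LHS]submxK; congr block_mx; ent; by rewrite ?opprK ?oppr0.
Qed.

Lemma lag (m1 m2 m3 C1 S1 C2 S2 C3 S3 X Y Z : R) :
  X = C1 * S2 - C2 * S1 -> Y = C1 * S3 + C3 * S1 -> Z = C2 * S3 + C3 * S2 ->
  (m1 * C1 ^+ 2 + m2 * C2 ^+ 2 + m3 * C3 ^+ 2) * (m1 * S1 ^+ 2 + m2 * S2 ^+ 2 + m3 * S3 ^+ 2)
  - (m1 * C1 * S1 + m2 * C2 * S2 - m3 * C3 * S3) ^+ 2
  = m1 * m2 * X ^+ 2 + m1 * m3 * Y ^+ 2 + m2 * m3 * Z ^+ 2.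
Proof. by move=> -> -> ->; ring. Qed.


Lemma trig (m1 m2 m3 th1 th2 th3 : R) : th1 + th2 + th3 = pi ->
  d1 m1 m2 m3 th2 th3 * d4 m1 m2 m3 th2 th3 - d2 m1 m2 m3 th2 th3 ^+ 2
  = beta m1 m2 m3 th1 th2 th3 / 36.
Proof.
move=> hpi.
have h1 : sin th1 = sin th2 * cos th3 + cos th2 * sin th3.
  rewrite -sinD (_ : th1 = - (th2 + th3) + pi); last by lra.
  by rewrite sinDpi sinN opprK.
have h3 : sin th3 = sin th2 * cos (th2 - th3) - cos th2 * sin (th2 - th3).
  by rewrite -sinB opprB addrC subrK.
have h2 : sin th2 = sin (th2 - th3) * cos (- th3) - cos (th2 - th3) * sin (- th3).
  by rewrite -sinB opprK subrK.
rewrite cosN sinN in h2.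
rewrite /beta /d1 /d2 /d4.
rewrite (lag m1 m2 m3 _ _ _ _ _ _ (sin th3) (sin th2) (sin th1)).
- by field.
- by rewrite h3; ring.
- by rewrite {1}h2; ring.
- by rewrite h1; ring.
Qed.
End H.

Theorem theorem3p5 (R : realType) (m1 m2 m3 th1 th2 th3 : R) :
  0 < m1 -> 0 < m2 -> 0 < m3 -> m1 + m2 + m3 = 1 ->
  0 < th1 -> 0 < th2 -> 0 < th3 -> th1 + th2 + th3 = pi ->
  exists T : 'M[R]_2,
    SO2 T /\
    (liftT T)^T *m J4 R *m liftT T = J4 R /\
    forall e theta : R, 0 <= e -> e < 1 ->
      liftT T *m (J4 R *m B2 m1 m2 m3 th2 th3 e theta)
      = (J4 R *m Bbar2 m1 m2 m3 th1 th2 th3 e theta) *m liftT T.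
Proof.
move=> hm1 hm2 hm3 hm ht1 ht2 ht3 hpi.
have hdet := @trig R m1 m2 m3 th1 th2 th3 hpi.
have hsum : d1 m1 m2 m3 th2 th3 + d4 m1 m2 m3 th2 th3 = 1.
  have e1 := congr1 (fun x => m1 * x) (cos2Dsin2 (th2 - th3)).
  have e2 := congr1 (fun x => m2 * x) (cos2Dsin2 th2).
  have e3 := congr1 (fun x => m3 * x) (cos2Dsin2 th3).
  move: e1 e2 e3 => /= e1 e2 e3.
  rewrite /d1 /d4; lra.
have hsum2 : (d1 m1 m2 m3 th2 th3 + d4 m1 m2 m3 th2 th3) ^+ 2 = 1 by rewrite hsum expr1n.
set D1 := d1 _ _ _ _ _ in hdet hsum hsum2 *.
set D2 := d2 _ _ _ _ _ in hdet hsum hsum2 *.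
set D4 := d4 _ _ _ _ _ in hdet hsum hsum2 *.
set bt := beta _ _ _ _ _ _ in hdet *.
have h9 : 9 - bt = ((1 - 3 * D1) - (1 - 3 * D4)) ^+ 2 + 4 * (- 3 * D2) ^+ 2.
  have : bt = 36 * (D1 * D4 - D2 ^+ 2) by rewrite hdet; field.
  move=> ->; lra.
set s := Num.sqrt (9 - bt).
have s0 : 0 <= s by apply: sqrtr_ge0.
have s2 : s ^+ 2 = ((1 - 3 * D1) - (1 - 3 * D4)) ^+ 2 + 4 * (- 3 * D2) ^+ 2.
  have nn : 0 <= 9 - bt by rewrite h9 addr_ge0 ?sqr_ge0 // mulr_ge0 ?sqr_ge0.
  by rewrite sqr_sqrtr.
have [p [q [pq [E1 [E2 [E3 E4]]]]]] := @eig R _ _ _ _ s0 s2.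
exists (mx2 p q (-q) p).
have TTt : mx2 p q (-q) p *m (mx2 p q (-q) p)^T = 1%:M.
  ent; lra.
have TtT : (mx2 p q (-q) p)^T *m mx2 p q (-q) p = 1%:M.
  ent; lra.
split; first by split => //; rewrite (@det2 R); lra.
split.
  rewrite /liftT /J4 tr_block_mx !mulmx_block.
  rewrite !(mul0mx, mulmx0, mul1mx, mulmx1, add0r, addr0, mulNmx, mulmxN, trmx0) TtT //.
move=> e theta he0 he1.
rewrite Bbar_block /liftT /J4 /B2 !mulmx_block -/bt -/s.
rewrite !(mul0mx, mulmx0, mul1mx, mulmx1, add0r, addr0, mulNmx, mulmxN).
have hc : 0 < 1 + e * cos theta.
  have := cos_geN1 theta; have := cos_le1 theta; nra.
have hc0 : 1 + e * cos theta != 0 by rewrite gt_eqF.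
congr block_mx.
- by rewrite mx2_comm.
- congr (- _).
  rewrite /Dtilde -/D1 -/D2 -/D4.
  apply: (@conj2 R _ _ _ _ _ _ _ _ _ _ _ E1 E2 E3 E4).
    rewrite (_ : (1 - 3 * D1 + (1 - 3 * D4) - s) = -1 - s); [|lra].
    by field.
  rewrite (_ : (1 - 3 * D1 + (1 - 3 * D4) + s) = -1 + s); [|lra].
  by field.
- by rewrite mx2_comm.
Qed.
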